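(* In the two-firm setting below, fix $t<T$ and current asset values $a_1=a_{1,t}>0$, $a_2=a_{2,t}>0$. Assume: - the asset correlation satisfies $\rho\in(-1,1)$; - the current equity prices satisfy $s_1,s_2>0$; - the equity Deltas satisfy $\Delta_{11},\Delta_{22}>0$ and $\Delta_{12},\Delta_{21}\ge 0$. Then the instantaneous equity correlation satisfies $\rho^s\ge\rho$.
   Context: Two-firm network model ($n=2$). Cross-holdings. $M^s_{12},M^s_{21},M^d_{12},M^d_{21}\in[0,1)$ are equity/debt cross-holding fractions: firm $i$ holds fraction $M^s_{ij}$ of firm $j$'s equity and fraction $M^d_{ij}$ of firm $j$'s debt. Diagonal entries are zero. Nominal debts are $d_1,d_2>0$. Payoffs at maturity. For terminal external asset values $\mathbf{a}_T\in(0,\infty)^2$, the terminal equity and debt values $\mathbf{x}^*(\mathbf{a}_T)=(s_1^*,s_2^*,r_1^*,r_2^* )$ are the unique solution of $$s_i=\max\Big\{0,\;a_{i,T}+\sum_j M^s_{ij}s_j+\sum_j M^d_{ij}r_j-d_i\Big\},$$ $$r_i=\min\Big\{d_i,\;a_{i,T}+\sum_j M^s_{ij}s_j+\sum_j M^d_{ij}r_j\Big\}.$$ Asset dynamics. Under the risk-neutral measure $Q$ the external assets follow the correlated geometric Brownian motion $$dA_{i,t}=rA_{i,t}\,dt+\sigma_iA_{i,t}\,dW_{i,t},$$ with interest rate $r$, volatilities $\sigma_1,\sigma_2>0$, and $d\langle W_1,W_2\rangle_t=\rho\,dt$. Prices and Deltas. With $\tau=T-t$, the time-$t$ equity prices are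 $$s_i=s_{i,t}=\mathbb{E}^Q_t\big[e^{-r\tau}s_i^*(\mathbf{A}_T)\big]$$ as functions of the current asset values $a_1,a_2$. The equity Deltas are $\Delta_{ij}=\partial s_{i,t}/\partial a_{j,t}$; write $\boldsymbol{\Delta}=(\Delta_{ij})$. Equity correlation. Let $\boldsymbol{\Sigma}=\begin{pmatrix}\sigma_1^2&\rho\sigma_1\sigma_2\\ \rho\sigma_1\sigma_2&\sigma_2^2\end{pmatrix}$ be the asset covariance matrix. The instantaneous equity covariance matrix is $$\boldsymbol{\Sigma}^s=\operatorname{diag}(s_1,s_2)^{-1}\,\boldsymbol{\Delta}\,\operatorname{diag}(a_1,a_2)\,\boldsymbol{\Sigma}\,\operatorname{diag}(a_1,a_2)\,\boldsymbol{\Delta}^T\operatorname{diag}(s_1,s_2)^{-1},$$ and the equity correlation is $\rho^s=\Sigma^s_{12}/\sqrt{\Sigma^s_{11}\Sigma^s_{22}}$. *)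

(* Defs.v *)
From HB Require Import structures.
From mathcomp Require Import all_boot all_order all_algebra.
From mathcomp Require Import all_classical all_reals all_analysis.
Set Implicit Arguments. Unset Strict Implicit. Unset Printing Implicit Defensive.
Import Order.TTheory GRing.Theory Num.Theory.
Import numFieldNormedType.Exports.
Local Open Scope classical_set_scope.
Local Open Scope ring_scope.

Section TwoFirm.
Variable R : realType.

(* Terminal equilibrium equations: x = (s, r) with s, r column vectors in R^2.
   Ms, Md : cross-holding matrices, d : nominal debts, aT : terminal external assets. *)
Definition is_terminal (Ms Md : 'M[R]_2) (d aT : 'cV[R]_2)
    (x : 'cV[R]_2 * 'cV[R]_2) : Prop :=
  forall i : 'I_2,
    x.1 i 0 = Num.max 0 (aT i 0 + (Ms *m x.1) i 0 + (Md *m x.2) i 0 - d i 0) /\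
    x.2 i 0 = Num.min (d i 0) (aT i 0 + (Ms *m x.1) i 0 + (Md *m x.2) i 0).

Definition xstar (Ms Md : 'M[R]_2) (d aT : 'cV[R]_2) : 'cV[R]_2 * 'cV[R]_2 :=
  xget (0, 0) [set x | is_terminal Ms Md d aT x].

Definition sstar (Ms Md : 'M[R]_2) (d aT : 'cV[R]_2) (i : 'I_2) : R :=
  (xstar Ms Md d aT).1 i 0.

(* Terminal asset values under Q, as functions of current values a, time to
   maturity tau and two independent standard normal variables z1, z2:
   W_{1,T}-W_{1,t} = sqrt tau * z1,
   W_{2,T}-W_{2,t} = sqrt tau * (rho z1 + sqrt(1-rho^2) z2). *)
Definition terminal_assets (r sig1 sig2 rho tau : R) (a : 'cV[R]_2) (z1 z2 : R)
  : 'cV[R]_2 :=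
  \col_(i < 2)
    (a i 0 * expR ((r - (if i == 0 :> nat then sig1 else sig2) ^+ 2 / 2) * tau
       + (if i == 0 :> nat then sig1 else sig2) * Num.sqrt tau *
         (if i == 0 :> nat then z1 else rho * z1 + Num.sqrt (1 - rho ^+ 2) * z2))).

Definition phi (z : R) : R := normal_pdf 0 1 z.

(* Time-t equity price s_{i,t} = E^Q_t[e^{-r tau} s_i^*(A_T)] as a function of
   the current asset values (a1, a2). *)
Definition equity_price (Ms Md : 'M[R]_2) (d : 'cV[R]_2)
    (r sig1 sig2 rho t T : R) (i : 'I_2) (a1 a2 : R) : R :=
  let tau := T - t in
  let a := \col_(k < 2) (if k == 0 :> nat then a1 else a2) in
  expR (- r * tau) *
  \int[lebesgue_measure]_(z1 in [set: R])
     (\int[lebesgue_measure]_(z2 in [set: R])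
        (sstar Ms Md d (terminal_assets r sig1 sig2 rho tau a z1 z2) i
           * phi z1 * phi z2)).

Definition delta (Ms Md : 'M[R]_2) (d : 'cV[R]_2)
    (r sig1 sig2 rho t T : R) (a1 a2 : R) : 'M[R]_2 :=
  \matrix_(i < 2, j < 2)
    (if j == 0 :> nat
     then derive1 (fun b => equity_price Ms Md d r sig1 sig2 rho t T i b a2) a1
     else derive1 (fun b => equity_price Ms Md d r sig1 sig2 rho t T i a1 b) a2).

Definition asset_cov (sig1 sig2 rho : R) : 'M[R]_2 :=
  \matrix_(i < 2, j < 2)
    (if (i == 0 :> nat) && (j == 0 :> nat) then sig1 ^+ 2
     else if (i == 1 :> nat) && (j == 1 :> nat) then sig2 ^+ 2
     else rho * sig1 * sig2).

Definition diag2 (x1 x2 : R) : 'M[R]_2 :=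
  diag_mx (\row_(k < 2) (if k == 0 :> nat then x1 else x2)).

Definition equity_cov (Ms Md : 'M[R]_2) (d : 'cV[R]_2)
    (r sig1 sig2 rho t T : R) (a1 a2 : R) : 'M[R]_2 :=
  let s1 := equity_price Ms Md d r sig1 sig2 rho t T 0 a1 a2 in
  let s2 := equity_price Ms Md d r sig1 sig2 rho t T 1 a1 a2 in
  let D := delta Ms Md d r sig1 sig2 rho t T a1 a2 in
  invmx (diag2 s1 s2) *m D *m diag2 a1 a2 *m asset_cov sig1 sig2 rho
    *m diag2 a1 a2 *m D^T *m invmx (diag2 s1 s2).

Definition equity_corr (Ms Md : 'M[R]_2) (d : 'cV[R]_2)
    (r sig1 sig2 rho t T : R) (a1 a2 : R) : R :=
  let S := equity_cov Ms Md d r sig1 sig2 rho t T a1 a2 in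
  S 0 1 / Num.sqrt (S 0 0 * S 1 1).

End TwoFirm.

(* Main.v *)
Require Import Defs.
From HB Require Import structures.
From mathcomp Require Import all_boot all_order all_algebra.
From mathcomp Require Import all_classical all_reals all_analysis.
From mathcomp Require Import ring lra.
Import Order.TTheory GRing.Theory Num.Theory.
Local Open Scope ring_scope.

Lemma inv_diag2 (R : realType) (s1 s2 : R) : s1 != 0 -> s2 != 0 ->
  invmx (diag2 s1 s2) = diag2 s1^-1 s2^-1.
Proof.
move=> h1 h2.
have H1 : diag2 s1 s2 *m diag2 s1^-1 s2^-1 = 1%:M.
  apply/matrixP => i j; rewrite !mxE big_ord_recr big_ord1 !mxE.
  case: i => [[|[|//]] ?]; case: j => [[|[|//]] ?]; rewrite /= ?mulr1n ?mulr0n;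
    rewrite ?mulr0 ?mul0r ?addr0 ?add0r ?mulfV //.
have H2 : diag2 s1^-1 s2^-1 *m diag2 s1 s2 = 1%:M.
  apply/matrixP => i j; rewrite !mxE big_ord_recr big_ord1 !mxE.
  case: i => [[|[|//]] ?]; case: j => [[|[|//]] ?]; rewrite /= ?mulr1n ?mulr0n;
    rewrite ?mulr0 ?mul0r ?addr0 ?add0r ?mulVf //.
have U : diag2 s1 s2 \in unitmx by apply: intro_unitmx; split; [exact: H2|exact: H1].
by rewrite -[RHS]mul1mx -(mulVmx U) -mulmxA H1 mulmx1.
Qed.

Lemma amgm (R : realType) (a p q : R) : 0 <= a -> 0 <= p -> 0 <= q ->
  a * a <= p * q -> 2 * a <= p + q.
Proof.
move=> ha hp hq h.
have h1 : (2 * a) ^+ 2 <= (p + q) ^+ 2.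
  have := sqr_ge0 (p - q); rewrite !expr2; nra.
rewrite -ler_sqr ?nnegrE //; lra.
Qed.

Lemma core (R : realType) (x1 y1 x2 y2 rho N : R) :
  0 <= x1 -> 0 <= y1 -> 0 <= x2 -> 0 <= y2 -> -1 < rho < 1 -> 0 <= N ->
  N ^+ 2 = (x1*x1 + rho*(x1*y1+y1*x1) + y1*y1) * (x2*x2 + rho*(x2*y2+y2*x2) + y2*y2) ->
  rho * N <= x1*x2 + rho*(x1*y2+y1*x2) + y1*y2.
Proof.
move=> hx1 hy1 hx2 hy2 /andP[hr1 hr2] hN hN2.
set P := x1*x2 + rho*(x1*y2+y1*x2) + y1*y2.
set w := x1*y2 - x2*y1.
have Hg : N ^+ 2 = P ^+ 2 + (1 - rho ^+ 2) * w ^+ 2 by rewrite hN2 /P /w; ring.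
have [c [hc0 hc2 hPc]] : exists c, [/\ 0 <= c, c ^+ 2 = w ^+ 2 & rho * c <= P].
  have [hw|hw] := lerP 0 w.
    exists w; split => //.
    have [hr|hr] := lerP 0 rho.
      have := mulr_ge0 hr (mulr_ge0 hx2 hy1); have := mulr_ge0 hx1 hx2; have := mulr_ge0 hy1 hy2.
      rewrite /P /w; nra.
    have : x2*y1 <= x1*y2 by rewrite /w in hw; lra.
    move=> h; rewrite /P /w.
    have h3 : 2 * (x2*y1) <= x1*x2 + y1*y2.
      apply: amgm; rewrite ?mulr_ge0 //.
      have -> : (x1*x2)*(y1*y2) = (x2*y1)*(x1*y2) by ring.
      by apply: ler_wpM2l; rewrite ?mulr_ge0.
    have : 0 <= (rho + 1) * (x2*y1) by rewrite mulr_ge0 ?mulr_ge0 //; lra.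
    nra.
  exists (- w); split; [lra| by rewrite sqrrN|].
  have [hr|hr] := lerP 0 rho.
    have := mulr_ge0 hr (mulr_ge0 hx1 hy2); have := mulr_ge0 hx1 hx2; have := mulr_ge0 hy1 hy2.
    rewrite /P /w; nra.
  have : x1*y2 <= x2*y1 by rewrite /w in hw; lra.
  move=> h; rewrite /P /w.
  have h3 : 2 * (x1*y2) <= x1*x2 + y1*y2.
      apply: amgm; rewrite ?mulr_ge0 //.
      have -> : (x1*x2)*(y1*y2) = (x1*y2)*(x2*y1) by ring.
      by apply: ler_wpM2l; rewrite ?mulr_ge0.
  have : 0 <= (rho + 1) * (x1*y2) by rewrite mulr_ge0 ?mulr_ge0 //; lra.
  nra.
have [hr|hr] := lerP 0 rho.
  have hrc : 0 <= rho * c by rewrite mulr_ge0.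
  have hP : 0 <= P by lra.
  have h1 : (rho * c) ^+ 2 <= P ^+ 2 by rewrite ler_sqr ?nnegrE.
  have h2 : 0 <= 1 - rho ^+ 2 by nra.
  have : (rho * N) ^+ 2 <= P ^+ 2.
    rewrite exprMn Hg -hc2.
    have := ler_wpM2l h2 h1. rewrite exprMn. nra.
  move=> h; rewrite -ler_sqr ?nnegrE //; nra.
have [hP|hP] := lerP 0 P; first nra.
have : P ^+ 2 <= (rho * N) ^+ 2.
  have h2 : 0 <= 1 - rho ^+ 2 by nra.
  have hrc : rho * c <= 0 by rewrite mulr_le0_ge0 //; lra.
  have h1 : P ^+ 2 <= (rho * c) ^+ 2.
    rewrite -sqrrN -[(rho*c)^+2]sqrrN ler_sqr ?nnegrE; lra.
  rewrite exprMn Hg -hc2.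
  have := ler_wpM2l h2 h1. rewrite exprMn. nra.
move=> h.
have : - P <= - rho * N.
  rewrite -ler_sqr ?nnegrE; [ by rewrite !sqrrN mulNr sqrrN | lra | nra].
lra.
Qed.

Lemma mul2 (R : realType) (A B : 'M[R]_2) (i j : 'I_2) :
  (A *m B) i j = A i 0 * B 0 j + A i 1 * B 1 j.
Proof. rewrite mxE !big_ord_recl big_ord0 addr0 /=. congr (_ * _ + _ * _); [congr (A i _)|congr (B _ j)]; exact/val_inj. Qed.

Lemma diag2E (R : realType) (x y : R) :
  [/\ diag2 x y 0 0 = x, diag2 x y 0 1 = 0, diag2 x y 1 0 = 0 & diag2 x y 1 1 = y].
Proof. by rewrite /diag2 !mxE. Qed.

Lemma covE (R : realType) (s1 s2 rho : R) :
  [/\ asset_cov s1 s2 rho 0 0 = s1 ^+ 2, asset_cov s1 s2 rho 0 1 = rho * s1 * s2,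
      asset_cov s1 s2 rho 1 0 = rho * s1 * s2 & asset_cov s1 s2 rho 1 1 = s2 ^+ 2].
Proof. by rewrite /asset_cov !mxE. Qed.

Lemma entries (R : realType) (s1 s2 a1 a2 sig1 sig2 rho : R) (D : 'M[R]_2) :
  s1 != 0 -> s2 != 0 ->
  let S := invmx (diag2 s1 s2) *m D *m diag2 a1 a2 *m asset_cov sig1 sig2 rho
    *m diag2 a1 a2 *m D^T *m invmx (diag2 s1 s2) in
  let x1 := D 0 0 * a1 * sig1 / s1 in let y1 := D 0 1 * a2 * sig2 / s1 in
  let x2 := D 1 0 * a1 * sig1 / s2 in let y2 := D 1 1 * a2 * sig2 / s2 in
  [/\ S 0 1 = x1*x2 + rho*(x1*y2+y1*x2) + y1*y2,
      S 0 0 = x1*x1 + rho*(x1*y1+y1*x1) + y1*y1 &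
      S 1 1 = x2*x2 + rho*(x2*y2+y2*x2) + y2*y2].
Proof.
move=> h1 h2 S x1 y1 x2 y2.
have [d1 d2 d3 d4] := diag2E _ s1^-1 s2^-1.
have [e1 e2 e3 e4] := diag2E _ a1 a2.
have [c1 c2 c3 c4] := covE _ sig1 sig2 rho.
rewrite /S inv_diag2 // /x1 /y1 /x2 /y2 !mul2 ![D^T _ _]mxE d1 d2 d3 d4 e1 e2 e3 e4 c1 c2 c3 c4.
split; field; by rewrite ?h1 ?h2.
Qed.

Theorem theorem1 (R : realType) (Ms Md : 'M[R]_2) (d : 'cV[R]_2)
    (r sig1 sig2 rho t T a1 a2 : R) :
  (forall i j : 'I_2, 0 <= Ms i j < 1) ->
  (forall i j : 'I_2, 0 <= Md i j < 1) ->
  (forall i : 'I_2, Ms i i = 0) ->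
  (forall i : 'I_2, Md i i = 0) ->
  (forall i : 'I_2, 0 < d i 0) ->
  0 < sig1 -> 0 < sig2 ->
  t < T -> 0 < a1 -> 0 < a2 ->
  -1 < rho < 1 ->
  0 < equity_price Ms Md d r sig1 sig2 rho t T 0 a1 a2 ->
  0 < equity_price Ms Md d r sig1 sig2 rho t T 1 a1 a2 ->
  let D := delta Ms Md d r sig1 sig2 rho t T a1 a2 in
  0 < D 0 0 -> 0 < D 1 1 -> 0 <= D 0 1 -> 0 <= D 1 0 ->
  rho <= equity_corr Ms Md d r sig1 sig2 rho t T a1 a2.
Proof.
move=> _ _ _ _ _ hsig1 hsig2 _ ha1 ha2 hrho hs1 hs2 D hD00 hD11 hD01 hD10.
pose s1 := equity_price Ms Md d r sig1 sig2 rho t T 0 a1 a2.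
pose s2 := equity_price Ms Md d r sig1 sig2 rho t T 1 a1 a2.
have [E1 E2 E3] := entries _ s1 s2 a1 a2 sig1 sig2 rho D (lt0r_neq0 hs1) (lt0r_neq0 hs2).
rewrite /equity_corr /equity_cov /= E1 E2 E3.
have {}hs1 : 0 < s1 := hs1. have {}hs2 : 0 < s2 := hs2.
clearbody s1 s2 D. clear E1 E2 E3.
have hx1 : 0 < D 0 0 * a1 * sig1 / s1 by apply: divr_gt0 => //; apply: mulr_gt0 => //; apply: mulr_gt0.
have hy1 : 0 <= D 0 1 * a2 * sig2 / s1 by apply: divr_ge0; [apply: mulr_ge0; [apply: mulr_ge0|]|]; rewrite // ltW.
have hx2 : 0 <= D 1 0 * a1 * sig1 / s2 by apply: divr_ge0; [apply: mulr_ge0; [apply: mulr_ge0|]|]; rewrite // ltW.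
have hy2 : 0 < D 1 1 * a2 * sig2 / s2 by apply: divr_gt0 => //; apply: mulr_gt0 => //; apply: mulr_gt0.
move: hx1 hy1 hx2 hy2.
set x1 := D 0 0 * a1 * sig1 / s1; set y1 := D 0 1 * a2 * sig2 / s1.
set x2 := D 1 0 * a1 * sig1 / s2; set y2 := D 1 1 * a2 * sig2 / s2.
move=> hx1 hy1 hx2 hy2.
have [hr1 hr2] := andP hrho.
have hQ (x y : R) : 0 < x -> 0 <= y -> 0 < x*x + rho*(x*y+y*x) + y*y.
  move=> hx hy.
  have -> : x*x + rho*(x*y+y*x) + y*y = ((1+rho)*((x+y)*(x+y)) + (1-rho)*((x-y)*(x-y)))/2.
    by field.
  apply: divr_gt0 => //; apply: ltr_pwDl; last by apply: mulr_ge0; [lra| rewrite -expr2 sqr_ge0].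
  apply: mulr_gt0; first lra.
  by apply: mulr_gt0; apply: ltr_pwDl.
have hQ2 : 0 < x2*x2 + rho*(x2*y2+y2*x2) + y2*y2.
  have -> : x2*x2 + rho*(x2*y2+y2*x2) + y2*y2 = y2*y2 + rho*(y2*x2+x2*y2) + x2*x2 by ring.
  exact: hQ.
have hQQ := mulr_gt0 (hQ _ _ hx1 hy1) hQ2.
rewrite ler_pdivlMr ?sqrtr_gt0 //.
apply: core; [exact: ltW|done|done|exact: ltW|done|exact: sqrtr_ge0|].
by rewrite sqr_sqrtr // ltW.
Qed.
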